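(* Consider the UAV Persistent Service model with parameters $f>0$, $c\ge0$ and displacement times $g_1,\dots,g_N>0$ with $2g_i<f$, and let $\bar g=\frac1N\sum_{i=1}^N g_i$. Let $M_{het}$ be the minimum number of UAVs of a feasible schedule for these heterogeneous displacement times, and let $M_{hom}=N+\left\lceil\frac{c+2\bar g}{f-2\bar g}N\right\rceil$ be the minimum number of UAVs of a feasible schedule in the homogeneous instance with the same $f,c,N$ and all displacement times equal to $\bar g$. Then $M_{het}\ge M_{hom}$.
   Context: UAV Persistent Service model: there is a single recharging station (RS) and a finite set of $N$ aerial locations, served by identical UAVs. A UAV with a full battery can fly for at most $f$ time units; replacing/recharging its battery at the RS takes $c$ time units. Flying between the RS and location $i$ (either direction) takes $g_i$ time units. A UAV's activity consists of sorties: it leaves the RS fully charged, flies to one location, stays there (covering it), and flies back to the RS, with total airborne time of the sortie at most $f$; it then spends $c$ time units recharging at the RS (possibly followed by idle time) before its next sortie. At time $0$ each UAV is fully charged, either at the RS or at a location. A location is covered at time $t$ if some UAV is present at it at time $t$. A schedule is feasible if every location is covered at every time $t\ge0$. *)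

(* Defs.v *)
From HB Require Import structures.
From mathcomp Require Import all_boot all_order all_algebra.
From mathcomp Require Import reals.
Set Implicit Arguments. Unset Strict Implicit. Unset Printing Implicit Defensive.
Import Order.TTheory GRing.Theory Num.Theory.
Local Open Scope ring_scope.

(* A sortie: the UAV departs the RS at time [dep], flies [g loc] to location
   [loc], stays there for [stay] time units, and flies [g loc] back to the RS.
   For a UAV that is (fully charged) at a location at time 0, its first
   sortie is encoded with virtual departure time [dep = - g loc]: it is then
   present at [loc] on [0, stay] and its real airborne time is [stay + g loc]. *)
Record sortie (N : nat) (R : Type) := Sortie {
  s_loc : 'I_N ;
  s_dep : R ;
  s_stay : R }.

(* The activity of one UAV: [at_loc0] says whether at time 0 the UAV is at a
   location (true) or at the RS (false); [plan n] is its n-th sortie, or None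
   if it performs fewer than n+1 sorties. *)
Record uav_plan (N : nat) (R : Type) := UavPlan {
  at_loc0 : bool ;
  plan : nat -> option (sortie N R) }.

Section Model.
Variables (R : realType) (N : nat) (f c : R) (g : 'I_N -> R).

Definition arrival (s : sortie N R) : R := s_dep s + g (s_loc s).
Definition departure_loc (s : sortie N R) : R := arrival s + s_stay s.
Definition return_rs (s : sortie N R) : R := departure_loc s + g (s_loc s).

Definition valid_plan (u : uav_plan N R) : Prop :=
  (forall n, plan u n.+1 <> None -> plan u n <> None) /\
  (forall n s, plan u n = Some s -> 0 <= s_stay s) /\
  (forall s, plan u 0 = Some s ->
     if at_loc0 u then s_dep s = - g (s_loc s) /\ s_stay s + g (s_loc s) <= f
     else 0 <= s_dep s /\ 2 * g (s_loc s) + s_stay s <= f) /\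
  (* later sorties: full battery flight bound, and recharge of c after
     returning from the previous sortie (possibly followed by idle time) *)
  (forall n s s', plan u n = Some s -> plan u n.+1 = Some s' ->
     2 * g (s_loc s') + s_stay s' <= f /\ return_rs s + c <= s_dep s').

Definition covered (m : nat) (S : 'I_m -> uav_plan N R) (j : 'I_N) (t : R)
  : Prop :=
  exists k n s, plan (S k) n = Some s /\ s_loc s = j /\
                arrival s <= t /\ t <= departure_loc s.

Definition feasible_schedule (m : nat) (S : 'I_m -> uav_plan N R) : Prop :=
  (forall k, valid_plan (S k)) /\
  (forall j t, 0 <= t -> covered S j t).

End Model.

(* Main.v *)
Require Import Defs.
From HB Require Import structures.
From mathcomp Require Import all_boot all_order all_algebra.
From mathcomp Require Import reals.
From mathcomp Require Import ring lra.
Import Order.TTheory GRing.Theory Num.Theory.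
Local Open Scope ring_scope.
Set Implicit Arguments. Unset Strict Implicit.

Lemma cover_len (R : realType) (I : finType) (a b : I -> R) :
  forall n (P : pred I), (#|P| <= n)%N -> forall T, 
  (forall t, 0 <= t <= T -> exists i, [&& P i, a i <= t & t <= b i]) ->
  T <= \sum_(i | P i) Num.max (b i - a i) 0.
Proof.
elim=> [|n IH] P hP T hcov.
- case: (lerP 0 T) => hT; last first.
    by apply: le_trans (ltW hT) _; apply: sumr_ge0 => i _; rewrite le_max lexx orbT.
  have [i /and3P[Pi _ _]] := hcov 0 (andb_true_intro (conj (lexx 0) hT)).
  have : (0 < #|P|)%N by apply/card_gt0P; exists i.
  by rewrite leqn0 in hP; rewrite (eqP hP).
- case: (lerP 0 T) => hT; last first.
    by apply: le_trans (ltW hT) _; apply: sumr_ge0 => i _; rewrite le_max lexx orbT.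
  have [j /and3P[Pj hja hjb]] := hcov T (andb_true_intro (conj hT (lexx T))).
  rewrite (bigD1 j Pj) /=.
  set rest := \sum_(i | P i && (i != j)) _.
  have hr0 : 0 <= rest by apply: sumr_ge0 => i _; rewrite le_max lexx orbT.
  have hmx : b j - a j <= Num.max (b j - a j) 0 by rewrite le_max lexx.
  case: (lerP (a j) 0) => haj.
    lra.
  suff : a j <= rest by lra.
  rewrite leNgt; apply/negP => hlt.
  have hcard : (#|[pred i | P i && (i != j)]| <= n)%N.
    have : (#|[pred i | P i && (i != j)]| < #|P|)%N.
      rewrite (cardD1 j P) [j \in P]Pj add1n ltnS; apply: subset_leq_card.
      by apply/subsetP => x; rewrite !inE andbC.
    by move=> h; rewrite -ltnS; apply: leq_trans h hP.
  have := IH [pred i | P i && (i != j)] hcard ((rest + a j) / 2).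
  have key : forall t, 0 <= t <= (rest + a j) / 2 ->
    exists i, [&& [pred i | P i && (i != j)] i, a i <= t & t <= b i].
    move=> t /andP[t0 t1].
    have tT : t <= T by lra.
    have [i /and3P[Pi h1 h2]] := hcov t (andb_true_intro (conj t0 tT)).
    exists i; rewrite /= Pi h1 h2 /= andbT.
    apply/eqP => eij; subst i; lra.
  move=> /(_ key) h.
  have e : \sum_(i | [pred i | P i && (i != j)] i) Num.max (b i - a i) 0 = rest by [].
  rewrite e in h; lra.
Qed.

Lemma plan_facts (R : realType) (N : nat) (f c : R) (g : 'I_N -> R)
  (u : uav_plan N R) :
  0 <= c -> (forall i, 0 < g i) -> (forall i, 2 * g i < f) ->
  valid_plan f c g u ->
  (forall n s, plan u n = Some s -> 0 <= s_stay s /\ s_stay s <= f) /\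
  (forall n s, plan u n.+1 = Some s -> s_stay s <= f - 2 * g (s_loc s)) /\
  (forall s, plan u 0 = Some s -> - f <= s_dep s) /\
  (forall n s s', plan u n = Some s -> plan u n.+1 = Some s' ->
     s_dep s + 2 * g (s_loc s) + s_stay s + c <= s_dep s').
Proof.
move=> hc hg hgf [hseg [hstay [hfirst hnext]]].
have step : forall n s s', plan u n = Some s -> plan u n.+1 = Some s' ->
     s_dep s + 2 * g (s_loc s) + s_stay s + c <= s_dep s'.
  move=> n s s' h h'; have [_ ] := hnext n s s' h h'.
  rewrite /return_rs /departure_loc /arrival; lra.
have later : forall n s, plan u n.+1 = Some s -> s_stay s <= f - 2 * g (s_loc s).
  move=> n s h.
  case e: (plan u n) => [s0|]; last by have := hseg n; rewrite h e => /(_ ltac:(discriminate)).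
  have [h1 _] := hnext n s0 s e h; lra.
split; last split => //; last split => //.
- move=> [|n] s h; have := hstay _ _ h; have := hg (s_loc s); move=> g0 s0.
  + have := hfirst s h; case: (at_loc0 u) => -[]; lra.
  + have := later n s h; lra.
- move=> s h; have := hfirst s h; have := hgf (s_loc s); have := hg (s_loc s).
  case: (at_loc0 u) => g0 g1 [] => ? ?; lra.
Qed.

Lemma uav_bound (R : realType) (N : nat) (f c : R) (g : 'I_N -> R)
  (W : 'I_N -> R) (Wm T : R) (u : uav_plan N R) :
  0 <= c -> 0 <= f -> 0 <= Wm -> (forall i, 0 < g i) -> (forall i, 2 * g i < f) ->
  (forall i, 0 <= W i <= Wm) ->
  (forall i s, 0 <= s -> s <= f - 2 * g i -> W i * s <= 2 * g i + s + c) ->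
  0 <= T -> valid_plan f c g u -> forall B,
  \sum_(n < B) (match plan u n with Some s =>
     if arrival g s <= T then W (s_loc s) * s_stay s else 0 | None => 0 end)
  <= T + f + 2 * Wm * f.
Proof.
move=> hc hf hWm hg hgf hW hWs hT hv.
have [hsf [hlat [hd0 hst]]] := plan_facts hc hg hgf hv.
have hseg := hv.1.
have prev : forall n s', plan u n.+1 = Some s' -> exists s, plan u n = Some s.
  move=> n s' h; case e: (plan u n) => [s|]; first by exists s.
  by have := hseg n; rewrite h e => /(_ ltac:(discriminate)).
have hWf : forall n s, plan u n = Some s -> W (s_loc s) * s_stay s <= Wm * f.
  move=> n s h; have [s0 s1] := hsf n s h; have /andP[w0 w1] := hW (s_loc s).
  by apply: ler_pM.
have Wge : forall n s, plan u n = Some s -> 0 <= W (s_loc s) * s_stay s.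
  move=> n s h; have [s0 s1] := hsf n s h; have /andP[w0 w1] := hW (s_loc s).
  by apply: mulr_ge0.
pose U := fun n => match plan u n with Some s =>
     if arrival g s <= T then W (s_loc s) * s_stay s else 0 | None => 0 end.
pose D0 := match plan u 0 with Some s => s_dep s | None => 0 end.
pose K := Num.max (T - D0) 0 + 2 * Wm * f.
pose E := fun n => match plan u n with Some s => if arrival g s <= T then
   s_dep s - D0 + (if n is 0 then 0 else Wm * f) else K | None => K end.
have hD0 : - f <= D0.
  by rewrite /D0; case e: (plan u 0) => [s|]; [apply: hd0 | lra].
have hmax : T - D0 <= Num.max (T - D0) 0 /\ 0 <= Num.max (T - D0) 0.
  by split; rewrite le_max lexx ?orbT.
have hmax2 : Num.max (T - D0) 0 <= T + f.
  by rewrite ge_max; apply/andP; split; lra.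
have hgen : forall n, E n + U n <= K.
  move=> n; rewrite /E /U; case e: (plan u n) => [s|]; last by rewrite addr0.
  case: ifP => ha; last by rewrite addr0.
  have := hWf n s e; have := hg (s_loc s).
  move: ha; rewrite /arrival => ha g0 hw.
  case: n e => [|n] e /=; rewrite /K; have := hD0; have := hmax; have := hmax2; have := mulr_ge0 hWm hf; lra.
suff : forall n, \sum_(i < n) U i <= E n.
  move=> h B; apply: le_trans (h B) _.
  have := hgen B; have : 0 <= U B.
    rewrite /U; case e: (plan u B) => [s|] //; case: ifP => // _.
    exact: Wge e.
  move=> h1 h2; rewrite /K in h2; have := hmax2; lra.
elim=> [|n IH].
  have K0 : 0 <= K by rewrite /K; have := hmax; have := mulr_ge0 hWm hf; lra.
  rewrite big_ord0 /E; case e: (plan u 0) => [s|]; last lra.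
  case: ifP => _; last lra.
  by rewrite /D0 e subrr addr0.
rewrite big_ord_recr /=; apply: le_trans (lerD IH (lexx _)) _.
case e1: (plan u n.+1) => [s'|]; last first.
  by have := hgen n; rewrite /E e1.
case a1: (arrival g s' <= T); last first.
  by have := hgen n; rewrite /E e1 a1.
have [s e] := prev n s' e1.
have := hst n s s' e e1; have := hg (s_loc s); have := hg (s_loc s').
move: a1; rewrite /E /U e e1 /arrival => a1 g1 g0 hss.
have [st0 _] := hsf _ _ e.
have -> : s_dep s + g (s_loc s) <= T by lra.
rewrite a1.
case: n IH e e1 => [|n] _ e e1.
  have := hWf 0%N s e; have [s0 _] := hsf _ _ e; lra.
have := hlat n s e; have [s0 _] := hsf _ _ e => hl.
have := hWs (s_loc s) (s_stay s) s0 hl; lra.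
Qed.

Lemma tangent (R : realType) (a b : R) : 0 < a -> 0 < b ->
  (2 * b - a) / (b * b) <= 1 / a.
Proof.
move=> ha hb.
have hbb : 0 < b * b by apply: mulr_gt0.
rewrite ler_pdivrMr // mul1r [_^-1 * _]mulrC ler_pdivlMr //.
have := sqr_ge0 (a - b); rewrite expr2 => h; nra.
Qed.

Lemma convex_sum (R : realType) (N : nat) (f : R) (g : 'I_N -> R) :
  (0 < N)%N -> (forall i, 2 * g i < f) ->
  let b := f - 2 * ((\sum_(i < N) g i) / N%:R) in
  0 < b /\ N%:R / b <= \sum_(i < N) 1 / (f - 2 * g i).
Proof.
move=> hN hgf b.
have hN0 : (N%:R : R) != 0 by rewrite pnatr_eq0 -lt0n.
have hNp : (0 : R) < N%:R by rewrite ltr0n.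
set G := \sum_(i < N) g i.
have hG : N%:R * (G / N%:R) = G by rewrite mulrC divfK.
have hsum : \sum_(i < N) (f - 2 * g i) = N%:R * b.
  rewrite big_split /= sumr_const card_ord sumrN -mulr_sumr.
  rewrite /b mulrBr mulrCA hG mulr_natl /G; congr (_ - _).
  by rewrite mulr_natl.
have hb : 0 < b.
  have : 0 < \sum_(i < N) (f - 2 * g i).
    rewrite (bigD1 (Ordinal hN)) //=.
    have := hgf (Ordinal hN).
    have : 0 <= \sum_(i < N | i != Ordinal hN) (f - 2 * g i).
      by apply: sumr_ge0 => i _; have := hgf i; lra.
    lra.
  by rewrite hsum pmulr_rgt0.
split=> //.
have H : \sum_(i < N) (2 * b - (f - 2 * g i)) / (b * b)
    <= \sum_(i < N) 1 / (f - 2 * g i).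
  by apply: ler_sum => i _; apply: tangent => //; have := hgf i; lra.
apply: le_trans H; rewrite le_eqVlt; apply/orP; left; apply/eqP; symmetry.
rewrite -mulr_suml big_split /= sumr_const card_ord sumrN hsum -mulr_natl.
have hb0 : b != 0 by rewrite gt_eqF.
field.
by rewrite hb0.
Qed.

Lemma dep_lb (R : realType) (N : nat) (f c : R) (g : 'I_N -> R)
  (u : uav_plan N R) (d : R) :
  0 <= c -> (forall i, 0 < g i) -> (forall i, 2 * g i < f) ->
  (forall i, d <= g i) -> valid_plan f c g u ->
  forall n s, plan u n = Some s -> - f + 2 * d * n%:R <= s_dep s.
Proof.
move=> hc hg hgf hd hv.
have [hsf [hlat [hd0 hst]]] := plan_facts hc hg hgf hv.
have hseg := hv.1.
elim=> [|n IH] s e.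
  by rewrite mulr0 addr0; apply: hd0.
case e0: (plan u n) => [s0|]; last first.
  by have := hseg n; rewrite e e0 => /(_ ltac:(discriminate)).
have := IH s0 e0; have := hst n s0 s e0 e; have [st0 _] := hsf _ _ e0.
have := hd (s_loc s0).
rewrite -(natr1 n) mulrDr mulr1; lra.
Qed.

Theorem theorem5 (R : realType) (N : nat) (f c : R) (g : 'I_N -> R)
  (hN : (0 < N)%N) (hf : 0 < f) (hc : 0 <= c)
  (hg : forall i, 0 < g i) (hgf : forall i, 2 * g i < f)
  (m : nat) (S : 'I_m -> uav_plan N R) :
  feasible_schedule f c g S ->
  let gbar := (\sum_(i < N) g i) / N%:R in
  (N%:Z + Num.ceil ((c + 2 * gbar) / (f - 2 * gbar) * N%:R) <= m%:Z)%R.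
Proof.
move=> [hval hcov] /=.
set gbar := (\sum_(i < N) g i) / N%:R.
have [hb hconv] := convex_sum hN hgf.
have [i0 _ hmin] := @arg_minP _ _ _ (Ordinal hN) xpredT g isT.
set d := g i0.
have hd : forall i, d <= g i by move=> i; exact: hmin.
have hd0 : 0 < d by apply: hg.
pose W := fun i => (f + c) / (f - 2 * g i).
pose Wm := \sum_(i < N) W i.
have hW0 : forall i, 0 < W i.
  move=> i; apply: divr_gt0; first lra.
  by have := hgf i; lra.
have hWle : forall i, W i <= Wm.
  move=> i; rewrite /Wm (bigD1 i) //= lerDl.
  by apply: sumr_ge0 => j _; apply: ltW.
have hWm0 : 0 <= Wm by apply: le_trans (ltW (hW0 (Ordinal hN))) (hWle _).
have hWs : forall i s, 0 <= s -> s <= f - 2 * g i -> W i * s <= 2 * g i + s + c.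
  move=> i s s0 s1; have := hgf i; have := hg i => g0 g1.
  rewrite /W mulrAC ler_pdivrMr; last lra.
  have : 0 <= (2 * g i + c) * (f - 2 * g i - s) by apply: mulr_ge0; lra.
  move=> h; nra.
have key : forall T, 0 <= T -> T * Wm <= m%:R * (T + f + 2 * Wm * f).
  move=> T hT.
  pose B := (Num.truncn ((T + f) / (2 * d))).+1.
  have hB : forall k n s, plan (S k) n = Some s -> arrival g s <= T -> (n < B)%N.
    move=> k n s e ha.
    have := dep_lb hc hg hgf hd (hval k) e; have := hg (s_loc s).
    move: ha; rewrite /arrival => ha g0 hl.
    have h1 : n%:R <= (T + f) / (2 * d).
      rewrite ler_pdivlMr; last lra.
      rewrite mulrC; lra.
    have h2 := truncnS_gt ((T + f) / (2 * d)).
    by rewrite -(ltr_nat R); apply: le_lt_trans h2.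
  pose av := fun i : ('I_m * 'I_B)%type =>
    match plan (S i.1) i.2 with Some s => arrival g s | None => 0 end.
  pose bv := fun i : ('I_m * 'I_B)%type =>
    match plan (S i.1) i.2 with Some s => departure_loc g s | None => 0 end.
  pose V := fun i : ('I_m * 'I_B)%type =>
    match plan (S i.1) i.2 with Some s => s_stay s | None => 0 end.
  pose Pj := fun j (i : ('I_m * 'I_B)%type) =>
    match plan (S i.1) i.2 with Some s => (s_loc s == j) && (arrival g s <= T)
    | None => false end.
  pose U' := fun i : ('I_m * 'I_B)%type =>
    match plan (S i.1) i.2 with Some s =>
     if arrival g s <= T then W (s_loc s) * s_stay s else 0 | None => 0 end.
  have hcovj : forall j, T <= \sum_(i | Pj j i) V i.
    move=> j.
    have hc' : forall t, 0 <= t <= T ->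
        exists i, [&& Pj j i, av i <= t & t <= bv i].
      move=> t /andP[t0 tT].
      have [k [n [s [e [el [h1 h2]]]]]] := hcov j t t0.
      have nB : (n < B)%N := hB k n s e (le_trans h1 tT).
      exists (k, Ordinal nB).
      by rewrite /Pj /av /bv /= e el eqxx /= (le_trans h1 tT) h1 h2.
    have := cover_len (a := av) (b := bv) (n := #|Pj j|) (P := Pj j) (leqnn _) hc'.
    move=> h; apply: le_trans h _; rewrite le_eqVlt; apply/orP; left; apply/eqP.
    apply: eq_bigr => i; rewrite /Pj /av /bv /V.
    case e: (plan (S i.1) i.2) => [s|] // _.
    have [st0 _] := (plan_facts hc hg hgf (hval i.1)).1 _ _ e.
    by rewrite /departure_loc addrC addKr max_l.
  have hex : \sum_(j < N) W j * (\sum_(i | Pj j i) V i) = \sum_i U' i.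
    rewrite (eq_bigr (fun j => \sum_i (if Pj j i then W j * V i else 0)));
      last by move=> j _; rewrite mulr_sumr big_mkcond.
    rewrite exchange_big; apply: eq_bigr => i _.
    rewrite /U' /Pj /V; case: (plan (S i.1) i.2) => [s|]; last by rewrite big1.
    case: ifP => ha; last by rewrite big1 // => j _; rewrite ?ha andbF.
    under eq_bigr do rewrite andbT.
    rewrite -big_mkcond (big_pred1 (s_loc s)) //.
  have hpair : \sum_i U' i = \sum_(k < m) \sum_(n < B) U' (k, n).
    by rewrite pair_big; apply: eq_bigr => -[k n].
  have h1 : T * Wm <= \sum_(j < N) W j * (\sum_(i | Pj j i) V i).
    rewrite /Wm mulr_sumr; apply: ler_sum => j _.
    by rewrite mulrC; apply: ler_wpM2l; [apply: ltW | apply: hcovj].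
  apply: le_trans h1 _; rewrite hex hpair.
  have h2 : \sum_(k < m) \sum_(n < B) U' (k, n) <=
            \sum_(k < m) (T + f + 2 * Wm * f).
    apply: ler_sum => k _.
    rewrite /U' /=.
    have hWi : forall i, 0 <= W i <= Wm by move=> i; rewrite hWle andbT ltW.
    have := @uav_bound R N f c g W Wm T (S k) hc (ltW hf) hWm0 hg hgf hWi hWs hT (hval k) B.
    by [].
  apply: le_trans h2 _.
  by rewrite sumr_const card_ord (mulr_natl _ m).
have hWmle : Wm <= m%:R.
  rewrite leNgt; apply/negP => hlt.
  pose C := f + 2 * Wm * f.
  have hC : 0 <= C.
    have := mulr_ge0 (mulr_ge0 (ler0n R 2) hWm0) (ltW hf); rewrite /C; lra.
  have hpos : 0 < Wm - m%:R by lra.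
  pose T := (m%:R * C + 1) / (Wm - m%:R).
  have hT : 0 <= T.
    apply: divr_ge0; last lra.
    have := mulr_ge0 (ler0n R m) hC; lra.
  have eT : T * (Wm - m%:R) = m%:R * C + 1 by rewrite /T divfK // gt_eqF.
  have := key T hT; rewrite -addrA -/C mulrDr => h.
  move: eT; rewrite mulrBr [T * m%:R]mulrC => eT.
  lra.
have eWm : Wm = (f + c) * \sum_(i < N) 1 / (f - 2 * g i).
  by rewrite /Wm mulr_sumr; apply: eq_bigr => i _; rewrite /W mul1r.
have hlow : (f + c) * (N%:R / (f - 2 * gbar)) <= Wm.
  by rewrite eWm; apply: ler_wpM2l => //; lra.
have hb0 : f - 2 * gbar != 0 by rewrite gt_eqF.
have ex : (f + c) * (N%:R / (f - 2 * gbar)) =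
          N%:R + (c + 2 * gbar) / (f - 2 * gbar) * N%:R.
  by field.
have hx : (c + 2 * gbar) / (f - 2 * gbar) * N%:R <= m%:R - N%:R.
  have := le_trans hlow hWmle; rewrite ex; lra.
have hceil : Num.ceil ((c + 2 * gbar) / (f - 2 * gbar) * N%:R) <= m%:Z - N%:Z.
  by rewrite ceil_le_int intrB.
lra.
Qed.
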